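(* Let $d, s, t, \ell$ be integers with $s\ge 1$, $\ell \ge 0$, $d \geq t-1$ and $t \geq \max\{5, \ell+4\}$. Then for every $\theta_{t,\ell}\in\Theta_{t,\ell}$, \[ \mathrm{rb}(W_d, \theta_{t,\ell}) \ge \left\lfloor \frac{2t-7}{t-3}\, d \right\rfloor + 1, \] and furthermore, if ($s = 2$ and $t \geq 6$) or ($s \geq 3$ and $t \geq 7$), then \[ \mathrm{rb}(W_d(s), F_t) \ge \left\lfloor \frac{(s+1)t-(3s+4)}{t-3}\, d \right\rfloor + 1 . \]
   Context: A subgraph of an edge-colored graph is rainbow if no two of its edges have the same color. For graphs $G$ and $H$, the rainbow number $\mathrm{rb}(G,H)$ is the minimum integer $k$ such that every edge-coloring of $G$ that uses at least $k$ distinct colors contains a rainbow subgraph isomorphic to $H$. For $d \ge 3$ and $s \ge 1$, $W_d(s) = \overline{K_s} + C_d$: hub vertices $u_1,\dots,u_s$, pairwise non-adjacent, each adjacent to every vertex of a cycle $v_1v_2\cdots v_dv_1$; $W_d := W_d(1)$. The fan $F_t$ is obtained from a cycle $v_1v_2\cdots v_tv_1$ by adding all chords $v_1v_i$, $3 \le i \le t-1$. For $0 \le \ell \le t-3$, $\Theta_{t,\ell}$ is the class of graphs obtained from a cycle $v_1v_2\cdots v_tv_1$ by adding exactly $\ell$ chords, each from $\{v_1v_i : 3 \le i \le t-1\}$. *)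

(* Defs.v *)
From mathcomp Require Import all_boot.
From mathcomp Require Import boolp.
Set Implicit Arguments. Unset Strict Implicit. Unset Printing Implicit Defensive.

(* A simple graph on a finite vertex type V is given by a symmetric,
   irreflexive adjacency relation g : rel V. *)

Definition edge_coloring (V : finType) (g : rel V) (c : V -> V -> nat) : Prop :=
  forall x y, g x y -> c x y = c y x.

Definition ncolors (V : finType) (g : rel V) (c : V -> V -> nat) : nat :=
  size (undup [seq c p.1 p.2 | p <- enum [pred p : V * V | g p.1 p.2]]).

Definition rainbow_copy (V W : finType) (g : rel V) (h : rel W)
    (c : V -> V -> nat) : Prop :=
  exists f : W -> V,
    [/\ injective f,
        (forall a b, h a b -> g (f a) (f b)) &
        (forall a b a' b', h a b -> h a' b' ->
           c (f a) (f b) = c (f a') (f b') ->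
           (a = a' /\ b = b') \/ (a = b' /\ b = a'))].

Definition rb_forces (V W : finType) (g : rel V) (h : rel W) (k : nat) : Prop :=
  forall c, edge_coloring g c -> k <= ncolors g c -> rainbow_copy g h c.

Lemma ncolors_le (V : finType) (g : rel V) c : ncolors g c <= #|{: V * V}|.
Proof.
rewrite /ncolors; apply: leq_trans (size_undup _) _.
by rewrite size_map -cardE max_card.
Qed.

Lemma rb_ex (V W : finType) (g : rel V) (h : rel W) :
  exists k, `[< rb_forces g h k >].
Proof.
exists #|{: V * V}|.+1; apply/asboolP => c _ H.
by have := leq_trans H (ncolors_le g c); rewrite ltnn.
Qed.

Definition rb (V W : finType) (g : rel V) (h : rel W) : nat :=
  ex_minn (rb_ex g h).

(* W_d(s) = complement(K_s) + C_d on vertices 'I_s (hubs) + 'I_d (cycle). *)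
Definition wheel_adj (s d : nat) : rel ('I_s + 'I_d) :=
  fun x y =>
    match x, y with
    | inl _, inr _ => true
    | inr _, inl _ => true
    | inr i, inr j => (i.+1 %% d == j) || (j.+1 %% d == i)
    | inl _, inl _ => false
    end.

(* Cycle v_1 ... v_t (vertex v_i is index i-1 in 'I_t) plus chords v_1 v_i
   for the indices in S. *)
Definition theta_adj (t : nat) (S : {set 'I_t}) : rel 'I_t :=
  fun i j => [|| (i.+1 %% t == j), (j.+1 %% t == i),
                 (i == 0 :> nat) && (j \in S) | (j == 0 :> nat) && (i \in S)].

(* Allowed chord endpoints: v_3, ..., v_{t-1}, i.e. indices 2 .. t-2. *)
Definition chord_set (t : nat) : {set 'I_t} := [set i : 'I_t | 2 <= i <= t - 2].

Definition in_Theta (t : nat) (l : nat) (S : {set 'I_t}) : Prop :=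
  S \subset chord_set t /\ #|S| = l.

Definition fan_adj (t : nat) : rel 'I_t := theta_adj (chord_set t).
Arguments in_Theta t l S : clear implicits.
Arguments fan_adj t : clear implicits.
Arguments wheel_adj s d : clear implicits.
Arguments rb V W g h : clear implicits.

(* Main.v *)
Require Import Defs.
From mathcomp Require Import all_boot.
From mathcomp Require Import zify boolp.
Set Implicit Arguments. Unset Strict Implicit. Unset Printing Implicit Defensive.


Definition pd d i := (i + d - 1) %% d.
Definition ecol d p i :=
  if p %| i then (if p %| pd d i then pd d (pd d i) else pd d i) else i.
Definition rcol d p a b := if a.+1 %% d == b then ecol d p a else ecol d p b.
Definition wcol s d p (x y : 'I_s + 'I_d) : nat :=
  match x, y with
  | inl h, inr i => d + (h * d + i)
  | inr i, inl h => d + (h * d + i)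
  | inr i, inr j => rcol d p i j
  | _, _ => 0
  end.

Lemma smod d a b : a < d -> a.+1 %% d = b -> (a.+1 = b /\ a.+1 < d) \/ (a.+1 = d /\ b = 0).
Proof.
move=> ad <-; case: (ltngtP a.+1 d) => h.
- by left; rewrite modn_small.
- lia.
- by right; rewrite h modnn.
Qed.

Lemma smodb d a b : a < d -> b < d ->
  (a.+1 %% d == b) = ((a.+1 == b) || ((a.+1 == d) && (b == 0))).
Proof.
move=> ad bd; apply/eqP/idP.
- by move=> h; have := smod ad h; lia.
- case/orP => [/eqP e|/andP[/eqP e /eqP ->]]; last by rewrite e modnn.
  by rewrite -e modn_small // e.
Qed.

Lemma emerge d p a b : 2 <= p -> 3 <= d -> a < d -> a.+1 %% d = b -> p %| b ->
  ecol d p a = ecol d p b.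
Proof.
move=> p2 d3 ad ab pb.
have pdb : pd d b = a.
  rewrite /pd; case: (smod ad ab) => [[<- _]|[e ->]].
  - have -> : a.+1 + d - 1 = a + d by lia.
    by rewrite modnDr modn_small.
  - by rewrite add0n modn_small; lia.
rewrite /ecol pb pdb; case pa: (p %| a) => //.
have npa : ~~ (p %| pd d a).
  case: (smod ad ab) => [[e _]|[e e0]].
  - move: pb; rewrite -e -addn1 dvdn_addr // dvdn1 => /eqP ?; exfalso; lia.
  - apply/negP => hp.
    have e2 : pd d a = a.-1.
      rewrite /pd; have -> : a + d - 1 = a.-1 + d by lia.
      by rewrite modnDr modn_small; lia.
    move: hp; rewrite e2 => hp.
    have : p %| a.-1 + 1 by rewrite addn1 prednK; [exact: pa | lia].
    by rewrite dvdn_addr // dvdn1 => /eqP ?; exfalso; lia.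
by rewrite (negbTE npa).
Qed.

Lemma interior d p x : 0 < p -> p < d -> x < d ->
  exists k, 0 < k <= p /\ p %| (x + k) %% d.
Proof.
move=> p0 pd0 xd; case: (ltnP (x + p) d) => h.
- exists (p - x %% p); have r := ltn_pmod x p0.
  split; first lia.
  rewrite modn_small; last lia.
  have e := divn_eq x p.
  have -> : x + (p - x %% p) = (x %/ p).+1 * p.
    rewrite mulSn; move: e r; move: (x %/ p * p) (x %% p) => q r; lia.
  exact: dvdn_mull (dvdnn p).
- exists (d - x); split; first lia.
  have -> : x + (d - x) = d by lia.
  by rewrite modnn dvdn0.
Qed.

Lemma modS1 x d : (x %% d).+1 %% d = x.+1 %% d.
Proof. by rewrite -addn1 modnDml addn1. Qed.


Lemma up_formula d m (g : nat -> nat) : g 0 < d ->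
  (forall k, k < m -> (g k).+1 %% d = g k.+1) ->
  forall k, k <= m -> g k = (g 0 + k) %% d.
Proof.
move=> g0 up; elim=> [|k IH] km; first by rewrite addn0 modn_small.
by rewrite -up // IH ?modS1 ?addnS //; lia.
Qed.

Lemma core d p m (g : nat -> nat) :
  2 <= p -> m = p.+1 -> p + 2 <= d ->
  (forall k, k <= m -> g k < d) ->
  (forall k, k < m -> (g k).+1 %% d = g k.+1 \/ (g k.+1).+1 %% d = g k) ->
  (forall k1 k2, k1 <= m -> k2 <= m -> g k1 = g k2 -> k1 = k2) ->
  exists k, 0 < k < m /\ rcol d p (g k.-1) (g k) = rcol d p (g k) (g k.+1).
Proof.
move=> p2 em pd2 bnd adj inj.
have notboth : forall k, k < m -> ~ ((g k).+1 %% d = g k.+1 /\ (g k.+1).+1 %% d = g k).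
  move=> k km [h1 h2].
  have b0 := bnd k (ltnW km); have b1 := bnd k.+1 km.
  have := smod b0 h1; have := smod b1 h2; lia.
have dir : forall k, k.+1 < m ->
   ((g k).+1 %% d = g k.+1 -> (g k.+1).+1 %% d = g k.+2) /\
   ((g k.+1).+1 %% d = g k -> (g k.+2).+1 %% d = g k.+1).
  move=> k km.
  have nk : g k <> g k.+2 by move=> /inj; lia.
  have b0 := bnd k (ltnW (ltnW km)); have b1 := bnd k.+1 (ltnW km).
  have b2 := bnd k.+2 km.
  case: (adj k.+1 km) => H2; split => H1 //; exfalso; apply: nk.
  - by rewrite -H1 -H2.
  - have := smod b0 H1; have := smod b2 H2; lia.
have m0 : 0 < m by lia.
case: (adj 0 m0) => h0.
- have allup : forall k, k < m -> (g k).+1 %% d = g k.+1.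
    elim=> [//|k IH] km; exact: (dir k km).1 (IH (ltnW km)).
  have gf := up_formula (bnd 0 (leq0n _)) allup.
  have [k [/andP[k0 kp] sp]] := @interior d p (g 0) (ltnW p2) ltac:(lia) (bnd 0 (leq0n _)).
  exists k; split; first lia.
  have ek : k.-1.+1 = k by lia.
  have u1 := allup k.-1 ltac:(lia); rewrite ek in u1.
  have u2 := allup k ltac:(lia).
  rewrite /rcol u1 u2 !eqxx.
  apply: (emerge p2) u1 _; [lia | apply: bnd; lia | by rewrite gf //; lia].
- have alldown : forall k, k < m -> (g k.+1).+1 %% d = g k.
    elim=> [//|k IH] km; exact: (dir k km).2 (IH (ltnW km)).
  pose h k := g (m - k).
  have hup : forall k, k < m -> (h k).+1 %% d = h k.+1.
    move=> k km; rewrite /h; have := alldown (m - k.+1) ltac:(lia).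
    by have -> : (m - k.+1).+1 = m - k by lia.
  have h0d : h 0 < d by rewrite /h subn0; apply: bnd.
  have hf := up_formula h0d hup.
  have [k' [/andP[k0 kp] sp]] := @interior d p (h 0) (ltnW p2) ltac:(lia) h0d.
  have sk : p %| g (m - k').
    have e := hf k' ltac:(lia); rewrite -e in sp; exact: sp.
  clear hf hup h0d sp; clearbody h.
  exists (m - k'); split; first lia.
  move: sk; have : 0 < m - k' < m by lia.
  move: (m - k') => k /andP[kk0 kkm] sk.
  have ek : k.-1.+1 = k by lia.
  have d1 := alldown k.-1 ltac:(lia); rewrite ek in d1.
  have d2 := alldown k ltac:(lia).
  have n1 : (g k.-1).+1 %% d != g k.
    apply/eqP => e; apply: (notboth k.-1 ltac:(lia)); rewrite ek; split => //.
  have n2 : (g k).+1 %% d != g k.+1.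
    apply/eqP => e; exact: (notboth k ltac:(lia)).
  rewrite /rcol (negbTE n1) (negbTE n2).
  symmetry; apply: (emerge p2) d2 sk; [lia | apply: bnd; lia].
Qed.


Lemma rb_lower (V W : finType) (g : rel V) (h : rel W) N :
  (exists c, [/\ edge_coloring g c, N <= ncolors g c & ~ rainbow_copy g h c]) ->
  N < rb V W g h.
Proof.
case=> c [ec Nc nr]; rewrite /rb; case: ex_minnP => m /asboolP Hm _.
rewrite ltnNge; apply/negP => mN; apply: nr; exact: Hm ec (leq_trans mN Nc).
Qed.

Lemma wcol_ec s d p : 3 <= d -> edge_coloring (wheel_adj s d) (@wcol s d p).
Proof.
move=> d3 [x|x] [y|y] //= adj.
rewrite /rcol; have xd := ltn_ord x; have yd := ltn_ord y.
case: eqP => e1; case: eqP => e2 //.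
- have := smod xd e1; have := smod yd e2; lia.
- by move: adj; rewrite (introF eqP e1) (introF eqP e2).
Qed.

Lemma cnt_mult p n : 0 < p -> count (dvdn p) (iota 0 n.+1) = n %/ p + 1.
Proof.
move=> p0; elim: n => [|n IH]; first by rewrite /= dvdn0 div0n.
rewrite -addn1 iotaD count_cat IH /= add0n addn0 addn1 (divnS _ p0).
case: (p %| n.+1) => /=; lia.
Qed.

Lemma ncol_ge s d p : 0 < d -> 0 < p ->
  s * d + (d - ((d.-1) %/ p + 1)) <= ncolors (wheel_adj s d) (@wcol s d p).
Proof.
move=> d0 p0.
pose L := [seq d + n | n <- iota 0 (s * d)] ++ [seq v <- iota 0 d | ~~ (p %| v)].
have sL : size L = s * d + (d - ((d.-1) %/ p + 1)).
  rewrite size_cat size_map size_iota size_filter.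
  have := count_predC (dvdn p) (iota 0 d).
  rewrite size_iota -(prednK d0) cnt_mult // => e.
  have -> : count (fun v => ~~ (p %| v)) (iota 0 d.-1.+1) = count (predC (dvdn p)) (iota 0 d.-1.+1) by [].
  change (d.-1.+1.-1) with d.-1; lia.
rewrite -sL /ncolors; apply: uniq_leq_size.
- rewrite cat_uniq map_inj_uniq ?iota_uniq ?filter_uniq ?iota_uniq //=; last exact: addnI.
  rewrite andbT; apply/hasPn => v; rewrite mem_filter mem_iota => /andP[_ /andP[_ vd]].
  apply/negP => /mapP [n _ e]; lia.
- move=> c; rewrite mem_cat mem_undup => /orP[].
  + case/mapP => n; rewrite mem_iota => /andP[_ nlt] ->.
    have hs : n %/ d < s by rewrite ltn_divLR.
    apply/mapP; exists (inl (Ordinal hs), inr (Ordinal (ltn_pmod n d0))).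
      by rewrite mem_enum.
    by rewrite /= -divn_eq.
  + rewrite mem_filter mem_iota => /andP[np /andP[_ vd]].
    apply/mapP; exists (inr (Ordinal vd), inr (Ordinal (ltn_pmod c.+1 d0))).
      by rewrite mem_enum inE /= eqxx.
    by rewrite /= /rcol eqxx /ecol (negbTE np).
Qed.

Lemma arith s d t p : p = t - 3 -> 5 <= t -> 1 <= s -> 0 < d ->
  ((s + 1) * t - (3 * s + 4)) * d %/ (t - 3) <= s * d + (d - ((d.-1) %/ p + 1)).
Proof.
move=> ep t5 s1 d0; rewrite -ep.
have p0 : 0 < p by lia.
rewrite -ltnS ltn_divLR //.
have c1 := leq_divM d.-1 p.
have c2 : d.-1 %/ p <= d.-1 by apply: leq_div.
move: c1 c2; move: (d.-1 %/ p) => c c1 c2.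
have -> : (s + 1) * t - (3 * s + 4) = s * p + p - 1 by nia.
nia.
Qed.


Lemma no_rainbow s d t (S : {set 'I_t}) p (f : 'I_t -> 'I_s + 'I_d) c0 :
  p = t - 3 -> 5 <= t -> t - 1 <= d -> injective f ->
  (forall a b, theta_adj S a b -> wheel_adj s d (f a) (f b)) ->
  (forall a b a' b', theta_adj S a b -> theta_adj S a' b' ->
     @wcol s d p (f a) (f b) = @wcol s d p (f a') (f b') ->
     (a = a' /\ b = b') \/ (a = b' /\ b = a')) ->
  (forall k, k <= t - 2 -> forall j : 'I_t, val j = (c0 + k) %% t ->
     exists y, f j = inr y) -> False.
Proof.
move=> ep t5 td finj fadj frb hrim.
have t0 : 0 < t by lia.
pose J k : 'I_t := Ordinal (ltn_pmod (c0 + k) t0).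
pose g k := match f (J k) with inr y => val y | inl _ => 0 end.
have Hf : forall k, k <= t - 2 -> exists y : 'I_d, f (J k) = inr y /\ val y = g k.
  move=> k kt; have [y e] := hrim k kt (J k) erefl.
  by exists y; rewrite /g e.
have Jinj : forall k1 k2, k1 <= t - 2 -> k2 <= t - 2 -> J k1 = J k2 -> k1 = k2.
  move=> k1 k2 h1 h2 /(congr1 val) /= /eqP; rewrite eqn_modDl.
  rewrite (@modn_small k1) ?(@modn_small k2); try lia.
have Jadj : forall k, theta_adj S (J k) (J k.+1).
  move=> k; rewrite /theta_adj /= modS1 addnS eqxx //.
have [k [/andP[k0 km] hc]] : exists k, 0 < k < t - 2 /\
    rcol d p (g k.-1) (g k) = rcol d p (g k) (g k.+1).
  apply: (@core d p (t - 2) g); try lia.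
  - by move=> k kt; have [y [_ <-]] := Hf k kt; exact: ltn_ord.
  - move=> k kt; have [y [e1 <-]] := Hf k (ltnW kt).
    have [z [e2 <-]] := Hf k.+1 kt.
    by have := fadj _ _ (Jadj k); rewrite e1 e2 /= => /orP[] /eqP; [left|right].
  - move=> k1 k2 h1 h2 e; apply: Jinj => //.
    have [y1 [e1 v1]] := Hf k1 h1; have [y2 [e2 v2]] := Hf k2 h2.
    apply: finj; rewrite e1 e2; congr inr; apply: val_inj; lia.
have ek : k.-1.+1 = k by lia.
have a1 := Jadj k.-1; rewrite ek in a1.
have := frb _ _ _ _ a1 (Jadj k).
have [y1 [e1 v1]] := Hf k.-1 ltac:(lia).
have [y2 [e2 v2]] := Hf k ltac:(lia).
have [y3 [e3 v3]] := Hf k.+1 ltac:(lia).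
rewrite e1 e2 e3 /= v1 v2 v3 => /(_ hc) [[/Jinj h _]|[/Jinj h _]]; lia.
Qed.


Definition code s d (v : 'I_s + 'I_d) : nat :=
  match v with inl h => val h | inr y => s + val y end.

Lemma code_inj s d : injective (@code s d).
Proof.
move=> [a|a] [b|b] /= e; have := ltn_ord a; have := ltn_ord b.
- by move=> _ _; rewrite (_ : a = b) //; apply: val_inj.
- lia.
- lia.
- by move=> _ _; rewrite (_ : a = b) //; apply: val_inj => /=; lia.
Qed.

Lemma wadj_rr s d (x y : 'I_d) : wheel_adj s d (inr x) (inr y) =
  ((x.+1 == y) || ((x.+1 == d) && (y == 0 :> nat))) ||
  ((y.+1 == x) || ((y.+1 == d) && (x == 0 :> nat))).
Proof. by rewrite /= !smodb. Qed.

Ltac gen_ords := repeat match goal with o : 'I_?n |- _ =>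
  have := ltn_ord o; move: (nat_of_ord o) => ?; clear o end.


Definition isl s d (v : 'I_s + 'I_d) := if v is inl _ then true else false.

Lemma alt s d (x : 'I_d) (u v : 'I_s + 'I_d) : 5 <= d ->
  wheel_adj s d (inr x) u -> wheel_adj s d (inr x) v -> wheel_adj s d u v ->
  u <> v -> inr x <> u -> inr x <> v -> isl u = ~~ isl v.
Proof.
move=> d5; case: u => [a|a]; case: v => [b|b]; rewrite ?wadj_rr //=.
move=> A B C nuv nxu nxv.
have n1 : (a : nat) != b by apply/eqP => /val_inj e; apply: nuv; rewrite e.
have n2 : (x : nat) != a by apply/eqP => /val_inj e; apply: nxu; rewrite e.
have n3 : (x : nat) != b by apply/eqP => /val_inj e; apply: nxv; rewrite e.
clear nuv nxu nxv; move: A B C n1 n2 n3; gen_ords; lia.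
Qed.

Lemma r3 s d (x y1 y2 y3 : 'I_d) : 3 <= d ->
  wheel_adj s d (inr x) (inr y1) -> wheel_adj s d (inr x) (inr y2) ->
  wheel_adj s d (inr x) (inr y3) -> y1 <> y2 -> y2 <> y3 -> y1 <> y3 -> False.
Proof.
move=> d3; rewrite !wadj_rr => A B C n1 n2 n3.
have m1 : (y1 : nat) != y2 by apply/eqP => /val_inj.
have m2 : (y2 : nat) != y3 by apply/eqP => /val_inj.
have m3 : (y1 : nat) != y3 by apply/eqP => /val_inj.
clear n1 n2 n3; move: A B C m1 m2 m3; gen_ords; lia.
Qed.

Lemma hub3 (a b c : 'I_2) : a <> b -> b <> c -> a <> c -> False.
Proof.
move=> n1 n2 n3.
have m1 : (a : nat) != b by apply/eqP => /val_inj.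
have m2 : (b : nat) != c by apply/eqP => /val_inj.
have m3 : (a : nat) != c by apply/eqP => /val_inj.
clear n1 n2 n3; move: m1 m2 m3; gen_ords; lia.
Qed.


Lemma fan_adj0 t (i j : 'I_t) : 3 <= t -> val i = 0 -> 0 < val j -> fan_adj t i j.
Proof.
move=> t3 i0 j0; rewrite /fan_adj /theta_adj /chord_set inE i0 eqxx /=.
have jt := ltn_ord j.
have j1 : 0 < (j : nat) := j0.
have t1 : 1 < t by lia.
rewrite (modn_small t1) smodb //.
have -> : (j == 0 :> nat) = false by lia.
rewrite andFb orbF; first lia.
lia.
Qed.

Lemma fan_adjS t (i j : 'I_t) : (val i).+1 = val j -> fan_adj t i j.
Proof.
move=> e; rewrite /fan_adj /theta_adj modn_small; first by rewrite e eqxx.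
rewrite e; exact: ltn_ord.
Qed.

Lemma hub0 s d t (f : 'I_t -> 'I_s + 'I_d) (t0 : 0 < t) :
  ((s = 2 /\ 6 <= t) \/ (3 <= s /\ 7 <= t)) -> t - 1 <= d -> injective f ->
  (forall a b, fan_adj t a b -> wheel_adj s d (f a) (f b)) ->
  exists h, f (Ordinal t0) = inl h.
Proof.
move=> hs td finj fadj.
case E: (f (Ordinal t0)) => [h|x]; first by exists h.
exfalso.
have t6 : 6 <= t by lia.
have d5 : 5 <= d by lia.
pose idx j : 'I_t := Ordinal (ltn_pmod j t0).
have vi : forall j, j < t -> val (idx j) = j by move=> j jt; rewrite /= modn_small.
have A : forall j, 0 < j < t -> wheel_adj s d (inr x) (f (idx j)).
  move=> j /andP[j0 jt]; rewrite -E; apply: fadj; apply: fan_adj0 => //; first lia.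
  by rewrite vi.
have B : forall j, 0 < j -> j.+1 < t -> wheel_adj s d (f (idx j)) (f (idx j.+1)).
  by move=> j j0 jt; apply: fadj; apply: fan_adjS; rewrite !vi //; lia.
have N : forall i j, i < t -> j < t -> i != j -> f (idx i) <> f (idx j).
  move=> i j it jt nij /finj /(congr1 val); rewrite !vi // => e.
  by move: nij; rewrite e eqxx.
have X : forall j, 0 < j < t -> inr x <> f (idx j).
  move=> j /andP[j0 jt]; rewrite -E => /finj /(congr1 val) /=; rewrite modn_small //; lia.
have Al : forall j, 0 < j -> j.+1 < t -> isl (f (idx j)) = ~~ isl (f (idx j.+1)).
  move=> j j0 jt; apply: alt => //.
  - by apply: A; lia.
  - by apply: A; lia.
  - by apply: B.
  - by apply: N; lia.
  - by apply: X; lia.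
  - by apply: X; lia.
have rim : forall j, isl (f (idx j)) = false -> exists y, f (idx j) = inr y.
  by move=> j; case: (f (idx j)) => // y _; exists y.
have hub : forall j, isl (f (idx j)) = true -> exists h, f (idx j) = inl h.
  by move=> j; case: (f (idx j)) => // h _; exists h.
have R3 : forall i j k, 0 < i -> i < j -> j < k -> k < t ->
    isl (f (idx i)) = false -> isl (f (idx j)) = false -> isl (f (idx k)) = false -> False.
  move=> i j k i0 ij jk kt hi hj hk.
  have [y1 e1] := rim _ hi; have [y2 e2] := rim _ hj; have [y3 e3] := rim _ hk.
  apply: (@r3 s d x y1 y2 y3); first lia.
  - by rewrite -e1; apply: A; lia.
  - by rewrite -e2; apply: A; lia.
  - by rewrite -e3; apply: A; lia.
  - by move=> e; apply: (N i j); rewrite ?e1 ?e2 ?e //; lia.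
  - by move=> e; apply: (N j k); rewrite ?e2 ?e3 ?e //; lia.
  - by move=> e; apply: (N i k); rewrite ?e1 ?e3 ?e //; lia.
have a1 := Al 1 isT ltac:(lia); have a2 := Al 2 isT ltac:(lia).
have a3 := Al 3 isT ltac:(lia); have a4 := Al 4 isT ltac:(lia).
case i1 : (isl (f (idx 1))).
- case: hs => [[es _]|[s3 t7]].
  + subst s.
    have i3 : isl (f (idx 3)) = true by move: a1 a2; rewrite i1; case: (isl (f (idx 2))); case: (isl (f (idx 3))).
    have i5 : isl (f (idx 5)) = true by move: a3 a4; rewrite i3; case: (isl (f (idx 4))); case: (isl (f (idx 5))).
    have [h1 e1] := hub _ i1; have [h3 e3] := hub _ i3; have [h5 e5] := hub _ i5.
    apply: (@hub3 h1 h3 h5).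
    * by move=> e; apply: (N 1 3); rewrite ?e1 ?e3 ?e //; lia.
    * by move=> e; apply: (N 3 5); rewrite ?e3 ?e5 ?e //; lia.
    * by move=> e; apply: (N 1 5); rewrite ?e1 ?e5 ?e //; lia.
  + have a5 := Al 5 isT ltac:(lia).
    have i2 : isl (f (idx 2)) = false by move: a1; rewrite i1; case: (isl (f (idx 2))).
    have i4 : isl (f (idx 4)) = false by move: a2 a3; rewrite i2; case: (isl (f (idx 3))); case: (isl (f (idx 4))).
    have i6 : isl (f (idx 6)) = false by move: a4 a5; rewrite i4; case: (isl (f (idx 5))); case: (isl (f (idx 6))).
    by apply: (R3 2 4 6) => //; lia.
- have i3 : isl (f (idx 3)) = false by move: a1 a2; rewrite i1; case: (isl (f (idx 2))); case: (isl (f (idx 3))).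
  have i5 : isl (f (idx 5)) = false by move: a3 a4; rewrite i3; case: (isl (f (idx 4))); case: (isl (f (idx 5))).
  by apply: (R3 1 3 5) => //; lia.
Qed.

Unset Implicit Arguments.

Theorem theorem4p2 (d s t l : nat) :
  1 <= s -> t - 1 <= d -> 5 <= t -> l + 4 <= t ->
  (forall S : {set 'I_t}, in_Theta t l S ->
     ((2 * t - 7) * d %/ (t - 3)).+1 <= rb _ _ (wheel_adj 1 d) (theta_adj S)) /\
  ((s = 2 /\ 6 <= t) \/ (3 <= s /\ 7 <= t) ->
     (((s + 1) * t - (3 * s + 4)) * d %/ (t - 3)).+1
       <= rb _ _ (wheel_adj s d) (fan_adj t)).
Proof.
move=> s1 td t5 lt.
have d0 : 0 < d by lia.
have p0 : 0 < t - 3 by lia.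
have t0 : 0 < t by lia.
split.
- move=> S _; apply: rb_lower; exists (@wcol 1 d (t - 3)); split.
  + apply: wcol_ec; lia.
  + apply: leq_trans (ncol_ge 1 d0 p0).
    exact: (@arith 1 d t (t - 3)).
  + case=> f [finj fadj frb].
    case: (pickP (fun j => isl (f j))) => [j hj | hn].
    * apply: (@no_rainbow 1 d t S (t - 3) f j.+1) => // k kt j' ej'.
      case E: (f j') => [h|y]; last by exists y.
      exfalso.
      have : f j' = f j.
        by move: hj; case: (f j) => // h' _; rewrite E (ord1 h) (ord1 h').
      move/finj => e; subst j'.
      have jt := ltn_ord j.
      have e2 : (j + 0) %% t = (j + k.+1) %% t by rewrite addn0 modn_small // -addSnnS -ej'.
      move/eqP: e2; rewrite eqn_modDl mod0n modn_small; [|lia].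
      move/eqP; lia.
    * apply: (@no_rainbow 1 d t S (t - 3) f 0) => // k kt j' ej'.
      have := hn j'; case: (f j') => // y _; by exists y.
- move=> hs; apply: rb_lower; exists (@wcol s d (t - 3)); split.
  + apply: wcol_ec; lia.
  + apply: leq_trans (ncol_ge s d0 p0).
    exact: (@arith s d t (t - 3)).
  + case=> f [finj fadj frb].
    have [h eh] := hub0 t0 hs td finj fadj.
    apply: (@no_rainbow s d t (chord_set t) (t - 3) f 1) => // k kt j' ej'.
    have jv : val j' = k.+1 by rewrite ej' modn_small; lia.
    have := fadj _ _ (fan_adj0 (i := Ordinal t0) (j := j') ltac:(lia) erefl ltac:(lia)).
    rewrite eh; case: (f j') => // y _; by exists y.
Qed.
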